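(* Let $C\subseteq[n]$ be a nonempty proper subset and let $\ket{\psi}=\ket{a}_C\otimes\ket{b}_{\overline{C}}$ be an $n$-qubit state, where $\ket{a}_C$ and $\ket{b}_{\overline{C}}$ are each $\epsilon$-far from every multipartite product state (on the qubits of $C$ and of $\overline{C}$ respectively). Let $S\subseteq[n]$ be a nonempty proper subset of the qubits. Then the reduced state $\psi_S$ on the qubits of $S$ satisfies $\mathrm{Tr}(\psi_S^2)=1$ if $S=C$ or $S=\overline{C}$, and otherwise $\mathrm{Tr}(\psi_S^2)\le1-\epsilon^2$.
   Context: $\overline{S}=[n]\setminus S$ for $S\subseteq[n]$. A state on a set $Q$ of qubits is multipartite product if it can be written as $\ket{a'}_D\otimes\ket{b'}_{Q\setminus D}$ for some nonempty proper subset $D\subsetneq Q$. A pure state $\ket{\phi}$ is $\epsilon$-far from a set $\mathcal{P}$ of pure states if $|\langle\phi|\chi\rangle|^2\le1-\epsilon^2$ for all $\ket{\chi}\in\mathcal{P}$ (equivalently trace distance at least $\epsilon$). *)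

(* Defs.v *)
(* Amplitudes live in an arbitrary numeric algebraically
   closed field K (e.g. algC or R[i]); conjugation is x^*. *)
From mathcomp Require Import all_boot all_order all_algebra.
Set Implicit Arguments. Unset Strict Implicit. Unset Printing Implicit Defensive.
Import Order.TTheory GRing.Theory Num.Theory.
Local Open Scope ring_scope.

Definition bits (n : nat) := {ffun 'I_n -> bool}.

(* Restriction of a basis string to the qubits in D (bits outside D set to 0).
   A basis string of the subsystem D is identified with a string x such that
   restr D x = x. *)
Definition restr n (D : {set 'I_n}) (x : bits n) : bits n :=
  [ffun i => (i \in D) && x i].

Definition on_set n (D : {set 'I_n}) (x : bits n) : bool := restr D x == x.

(* Juxtaposition of a string on D and a string on a disjoint set. *)
Definition merge n (x y : bits n) : bits n := [ffun i => x i || y i].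

Section Q.
Variables (K : numClosedFieldType) (n : nat).

(* A vector on the qubit set Q: amplitudes indexed by basis strings of Q
   (zero on strings not supported in Q). *)
Definition vec_on (Q : {set 'I_n}) (v : bits n -> K) : Prop :=
  forall x, ~~ on_set Q x -> v x = 0.

Definition inner (v w : bits n -> K) : K := \sum_(x : bits n) (v x)^* * w x.

Definition state_on (Q : {set 'I_n}) (v : bits n -> K) : Prop :=
  vec_on Q v /\ inner v v = 1.

Definition tens (D E : {set 'I_n}) (a b : bits n -> K) : bits n -> K :=
  fun x => if on_set (D :|: E) x then a (restr D x) * b (restr E x) else 0.

Definition multipartite_product (Q : {set 'I_n}) (chi : bits n -> K) : Prop :=
  exists D : {set 'I_n}, [/\ D != set0, D \proper Q &
    exists a b, [/\ state_on D a, state_on (Q :\: D) b & chi = tens D (Q :\: D) a b]].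

Definition far_from_product (eps : K) (Q : {set 'I_n}) (phi : bits n -> K) : Prop :=
  forall chi, state_on Q chi -> multipartite_product Q chi ->
    `|inner phi chi| ^+ 2 <= 1 - eps ^+ 2.

(* Reduced density matrix psi_S = Tr_{~S} |psi><psi|, with entries indexed
   by basis strings x, y of S. *)
Definition reduced (S : {set 'I_n}) (psi : bits n -> K) (x y : bits n) : K :=
  \sum_(z : bits n | on_set (~: S) z) psi (merge x z) * (psi (merge y z))^*.

Definition purity (S : {set 'I_n}) (psi : bits n -> K) : K :=
  \sum_(x : bits n | on_set S x) \sum_(y : bits n | on_set S y)
     reduced S psi x y * reduced S psi y x.

End Q.

(* Main.v *)
From Pilot Require Import Defs.
From mathcomp Require Import all_boot all_order all_algebra.
From mathcomp Require Import ring.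
Import Order.TTheory GRing.Theory Num.Theory.
Local Open Scope ring_scope.
Set Implicit Arguments. Unset Strict Implicit. Unset Printing Implicit Defensive.
Local Notation merge := Pilot.Defs.merge.

Section Bits.
Variable n : nat.
Implicit Types (D E : {set 'I_n}) (x y z : bits n).

Lemma on_setP D x : reflect (forall i, i \notin D -> x i = false) (on_set D x).
Proof.
rewrite /on_set; apply: (iffP eqP) => [H i Hi | H].
  by rewrite -H ffunE (negbTE Hi).
apply/ffunP => i; rewrite ffunE; case: (boolP (i \in D)) => //= Hi.
by rewrite H.
Qed.

Definition z0 : bits n := [ffun => false].

Lemma on_set_z0 D : on_set D z0.
Proof. by apply/on_setP => i _; rewrite ffunE. Qed.

Lemma on_set0 x : on_set set0 x = (x == z0).
Proof.
apply/idP/eqP => [/on_setP H | ->]; last exact: on_set_z0.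
by apply/ffunP => i; rewrite ffunE H // inE.
Qed.

Lemma on_set_restr D x : on_set D (restr D x).
Proof. by apply/on_setP => i Hi; rewrite ffunE (negbTE Hi). Qed.

Lemma restr_id D x : on_set D x -> restr D x = x.
Proof. by rewrite /on_set => /eqP. Qed.

Lemma restr_merge D x y : restr D (merge x y) = merge (restr D x) (restr D y).
Proof. by apply/ffunP => i; rewrite !ffunE; case: (i \in D). Qed.

Lemma merge_z0 x : merge x z0 = x.
Proof. by apply/ffunP => i; rewrite !ffunE orbF. Qed.

Lemma merge0z x : merge z0 x = x.
Proof. by apply/ffunP => i; rewrite !ffunE. Qed.

Lemma mergeC x y : merge x y = merge y x.
Proof. by apply/ffunP => i; rewrite !ffunE orbC. Qed.

Lemma mergeA x y z : merge x (merge y z) = merge (merge x y) z.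
Proof. by apply/ffunP => i; rewrite !ffunE orbA. Qed.

Lemma restr_disj D E x : on_set E x -> (forall i, i \in D -> i \in E = false) ->
  restr D x = z0.
Proof.
move/on_setP => Hx HDE; apply/ffunP => i; rewrite !ffunE.
case: (boolP (i \in D)) => //= Hi; apply: Hx; by rewrite HDE.
Qed.

Lemma on_set_merge D E x y : on_set D x -> on_set E y -> on_set (D :|: E) (merge x y).
Proof.
move=> /on_setP Hx /on_setP Hy; apply/on_setP => i; rewrite inE negb_or => /andP[H1 H2].
by rewrite ffunE Hx // Hy.
Qed.

Lemma on_set_sub D E x : D \subset E -> on_set D x -> on_set E x.
Proof.
move=> /subsetP HDE /on_setP Hx; apply/on_setP => i Hi; apply: Hx.
by apply: contra Hi; apply: HDE.
Qed.

Lemma merge_restr D E x : on_set (D :|: E) x -> merge (restr D x) (restr E x) = x.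
Proof.
move/on_setP => Hx; apply/ffunP => i; rewrite !ffunE.
have := Hx i; rewrite inE negb_or.
by case: (i \in D); case: (i \in E); case: (x i) => //= /(_ isT).
Qed.

Lemma restr_split C A B x1 x2 : on_set (A :&: C) x1 -> on_set (B :&: ~: C) x2 ->
  restr C (merge x1 x2) = x1 /\ restr (~: C) (merge x1 x2) = x2.
Proof.
move=> H1 H2.
have H1C : on_set C x1 by apply: on_set_sub H1; exact: subsetIr.
have H2C : on_set (~: C) x2 by apply: on_set_sub H2; exact: subsetIr.
rewrite !restr_merge (restr_id H1C) (restr_id H2C).
rewrite (restr_disj (D:=C) H2C); last by move=> i; rewrite inE => ->.
rewrite (restr_disj (D:=~: C) H1C); last by move=> i; rewrite inE => /negbTE.
by rewrite merge_z0 merge0z.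
Qed.

Section Sum.
Variable R : nmodType.

Lemma sum_split D E (F : bits n -> R) : (forall i, i \in D -> i \in E = false) ->
  \sum_(z | on_set (D :|: E) z) F z =
  \sum_(x | on_set D x) \sum_(y | on_set E y) F (merge x y).
Proof.
move=> HDE.
rewrite (partition_big (restr D) (on_set D)); last by move=> z _; apply: on_set_restr.
apply: eq_bigr => x Hx.
rewrite (reindex_onto (merge x) (restr E)); last first.
  by move=> z /andP[Hz /eqP <-]; apply: merge_restr.
apply: eq_bigl => y; apply/idP/idP.
  by move=> /andP[_ /eqP <-]; apply: on_set_restr.
move=> Hy; rewrite on_set_merge //= restr_merge (restr_id Hx) (restr_disj Hy HDE).
rewrite merge_z0 eqxx /= restr_merge (restr_id Hy) (@restr_disj E D x Hx) ?merge0z //.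
by move=> i Hi; apply/negbTE; apply/negP => HD; rewrite HDE in Hi.
Qed.
End Sum.
End Bits.

Section Quantum.
Variables (K : numClosedFieldType) (n : nat).
Implicit Types (D E X Y Q : {set 'I_n}) (x y z : bits n) (v u w : bits n -> K).

Definition rho v Y x x' : K :=
  \sum_(y | on_set Y y) v (merge x y) * (v (merge x' y))^*.
Definition Pur v X Y : K :=
  \sum_(x | on_set X x) \sum_(x' | on_set X x') rho v Y x x' * rho v Y x' x.

Lemma purityE S v : purity S v = Pur v S (~: S).
Proof. by []. Qed.

Lemma rho_conj v Y x x' : (rho v Y x x')^* = rho v Y x' x.
Proof.
rewrite /rho rmorph_sum; apply: eq_bigr => y _.
by rewrite rmorphM /= conjCK mulrC.
Qed.

Lemma Pur_sq v X Y : Pur v X Y =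
  \sum_(x | on_set X x) \sum_(x' | on_set X x') `|rho v Y x x'| ^+ 2.
Proof.
apply: eq_bigr => x _; apply: eq_bigr => x' _.
by rewrite normCK rho_conj.
Qed.

Lemma Pur_ge0 v X Y : 0 <= Pur v X Y.
Proof.
rewrite Pur_sq; apply: sumr_ge0 => x _; apply: sumr_ge0 => x' _.
exact: exprn_ge0.
Qed.

Lemma sum_supp Q (F : bits n -> K) : (forall z, ~~ on_set Q z -> F z = 0) ->
  \sum_z F z = \sum_(z | on_set Q z) F z.
Proof.
move=> H; rewrite (bigID (on_set Q)) /= [X in _ + X]big1 ?addr0 //.
Qed.

Lemma norm1 Q v : state_on Q v -> \sum_(z | on_set Q z) `|v z| ^+ 2 = 1.
Proof.
move=> [Hv Hn]; rewrite -Hn /inner (@sum_supp Q).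
  by apply: eq_bigr => z _; rewrite normCK mulrC.
by move=> z Hz; rewrite Hv // mulr0.
Qed.

Lemma sum_set0 (F : bits n -> K) : \sum_(z | on_set set0 z) F z = F (z0 n).
Proof. by apply: big_pred1 => z; rewrite on_set0. Qed.

Lemma Pur_degY Q v : state_on Q v -> Pur v Q set0 = 1.
Proof.
move=> Hv.
have E : forall x x', rho v set0 x x' = v x * (v x')^*.
  by move=> x x'; rewrite /rho sum_set0 !merge_z0.
rewrite /Pur.
transitivity (\sum_(x | on_set Q x) \sum_(x' | on_set Q x') (`|v x| ^+ 2 * `|v x'| ^+ 2)).
  apply: eq_bigr => x _; apply: eq_bigr => x' _.
  rewrite !E !normCK; ring.
have N := norm1 Hv; rewrite -(mulr1 1) -{1}N mulr_suml; apply: eq_bigr => x _; by rewrite -N mulr_sumr.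
Qed.

Lemma Pur_degX Q v : state_on Q v -> Pur v set0 Q = 1.
Proof.
move=> Hv; rewrite /Pur !sum_set0.
have -> : rho v Q (z0 n) (z0 n) = 1.
  rewrite -(norm1 Hv); apply: eq_bigr => y _; by rewrite merge0z normCK.
by rewrite mulr1.
Qed.


Definition disj X Y := forall i, i \in X -> i \in Y = false.

Lemma disjC X Y : disj X Y -> disj Y X.
Proof. by move=> H i Hi; apply/negbTE/negP => HX; rewrite H in Hi. Qed.

Lemma tens_merge X Y u w x y : disj X Y -> on_set X x -> on_set Y y ->
  tens X Y u w (merge x y) = u x * w y.
Proof.
move=> HXY Hx Hy; rewrite /tens on_set_merge // restr_merge (restr_id Hx).
rewrite (restr_disj Hy HXY) merge_z0 restr_merge (restr_id Hy).
by rewrite (restr_disj Hx (disjC HXY)) merge0z.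
Qed.

Lemma tens_vec X Y u w : vec_on (X :|: Y) (tens X Y u w).
Proof. by move=> z Hz; rewrite /tens (negbTE Hz). Qed.

Lemma tens_inner v X Y u w : disj X Y ->
  inner v (tens X Y u w) =
  \sum_(x | on_set X x) \sum_(y | on_set Y y) (v (merge x y))^* * (u x * w y).
Proof.
move=> HXY; rewrite /inner (@sum_supp (X :|: Y)); last first.
  by move=> z Hz; rewrite tens_vec // mulr0.
rewrite sum_split //; apply: eq_bigr => x Hx; apply: eq_bigr => y Hy.
by rewrite tens_merge.
Qed.

Lemma tens_state X Y u w : disj X Y -> state_on X u -> state_on Y w ->
  state_on (X :|: Y) (tens X Y u w).
Proof.
move=> HXY Hu Hw; split; first exact: tens_vec.
rewrite tens_inner //.
transitivity (\sum_(x | on_set X x) \sum_(y | on_set Y y) (`|u x| ^+ 2 * `|w y| ^+ 2)).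
  apply: eq_bigr => x Hx; apply: eq_bigr => y Hy.
  rewrite tens_merge // !normCK rmorphM; ring.
have N1 := norm1 Hu; have N2 := norm1 Hw.
rewrite -(mulr1 1) -{1}N1 mulr_suml; apply: eq_bigr => x _; by rewrite -N2 mulr_sumr.
Qed.

Lemma delta_state X : state_on X (fun x => ((x == z0 n)%:R : K)).
Proof.
split.
  move=> x Hx; have /negbTE -> : x != z0 n.
    by apply: contraNneq Hx => ->; exact: on_set_z0.
  by [].
rewrite /inner (bigD1 (z0 n)) //= eqxx big1 ?addr0; first by rewrite rmorph1 mulr1.
by move=> x /negbTE ->; rewrite mulr0.
Qed.

Lemma far_bound eps Q X Y v : disj X Y -> X :|: Y = Q -> X != set0 -> Y != set0 ->
  state_on Q v -> far_from_product eps Q v -> Pur v X Y <= 1 - eps ^+ 2.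
Proof.
move=> HXY HQ HX0 HY0 Hv Hfar0.
set m := 1 - eps ^+ 2.
have HQX : Q :\: X = Y.
  rewrite -HQ; apply/setP => i; rewrite !inE.
  by case HiX: (i \in X); rewrite ?andbT ?andbF //= HXY.
have HXQ : X \proper Q.
  rewrite properE -HQ subsetUl /=; apply/subsetPn.
  case/set0Pn: HY0 => j Hj; exists j; first by rewrite inE Hj orbT.
  by rewrite (disjC HXY).
have Hfar : forall u w, state_on X u -> state_on Y w ->
    `|inner v (tens X Y u w)| ^+ 2 <= m.
  move=> u w Hu Hw; apply: Hfar0.
    by rewrite -HQ; apply: tens_state.
  exists X; split => //; exists u, w; rewrite HQX; split => //.
have m0 : 0 <= m.
  apply: le_trans (Hfar _ _ (delta_state X) (delta_state Y)).
  exact: exprn_ge0.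
have claimA : forall w,
    \sum_(x | on_set X x) `|\sum_(y | on_set Y y) v (merge x y) * w y| ^+ 2
    <= m * \sum_(y | on_set Y y) `|w y| ^+ 2.
  move=> w.
  set Mw := fun x => \sum_(y | on_set Y y) v (merge x y) * w y.
  rewrite -/(Mw _).
  set N2 := \sum_(x | on_set X x) _; set W2 := \sum_(y | on_set Y y) _.
  have N0 : 0 <= N2 by apply: sumr_ge0 => x _; exact: exprn_ge0.
  have W0 : 0 <= W2 by apply: sumr_ge0 => x _; exact: exprn_ge0.
  case: (eqVneq W2 0) => [W2z | W2nz].
    have wz : forall y, on_set Y y -> w y = 0.
      move=> y Hy.
      have := psumr_eq0P (fun y _ => exprn_ge0 2 (normr_ge0 (w y))) W2z Hy.
      by move/eqP; rewrite expf_eq0 /= normr_eq0 => /eqP.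
    rewrite W2z mulr0 /N2 big1 // => x _.
    by rewrite /Mw big1 ?normr0 ?expr0n // => y Hy; rewrite wz // mulr0.
  case: (eqVneq N2 0) => [-> | N2nz]; first exact: mulr_ge0.
  set s := sqrtC N2; set t := sqrtC W2.
  have s0 : 0 < s by rewrite lt_def sqrtC_eq0 N2nz sqrtC_ge0.
  have t0 : 0 < t by rewrite lt_def sqrtC_eq0 W2nz sqrtC_ge0.
  have sc : s^* = s by apply: geC0_conj; exact: ltW.
  have tc : t^* = t by apply: geC0_conj; exact: ltW.
  pose u := fun x => if on_set X x then Mw x / s else 0.
  pose w' := fun y => if on_set Y y then (w y)^* / t else 0.
  have Hu : state_on X u.
    split; first by move=> x Hx; rewrite /u (negbTE Hx).
    rewrite /inner (@sum_supp X); last by move=> x Hx; rewrite /u (negbTE Hx) mulr0.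
    transitivity (\sum_(x | on_set X x) `|Mw x| ^+ 2 * (s^-1) ^+ 2).
      apply: eq_bigr => x Hx; rewrite /u Hx rmorphM fmorphV /= sc normCK; ring.
    by rewrite -mulr_suml -/N2 exprVn sqrtCK mulfV.
  have Hw' : state_on Y w'.
    split; first by move=> y Hy; rewrite /w' (negbTE Hy).
    rewrite /inner (@sum_supp Y); last by move=> y Hy; rewrite /w' (negbTE Hy) mulr0.
    transitivity (\sum_(y | on_set Y y) `|w y| ^+ 2 * (t^-1) ^+ 2).
      apply: eq_bigr => y Hy; rewrite /w' Hy rmorphM fmorphV /= tc conjCK normCK; ring.
    by rewrite -mulr_suml -/W2 exprVn sqrtCK mulfV.
  have Hin : inner v (tens X Y u w') = N2 * (s^-1 * t^-1).
    rewrite tens_inner // /N2 mulr_suml; apply: eq_bigr => x Hx.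
    transitivity (Mw x * (s^-1 * t^-1) *
       \sum_(y | on_set Y y) (v (merge x y) * w y)^*).
      rewrite mulr_sumr; apply: eq_bigr => y Hy.
      rewrite /u /w' Hx Hy rmorphM; ring.
    by rewrite -rmorph_sum -/(Mw x) normCK; ring.
  have := Hfar _ _ Hu Hw'; rewrite Hin ger0_norm; last first.
    by apply: mulr_ge0 => //; apply: mulr_ge0; rewrite invr_ge0 ltW.
  have -> : (N2 * (s^-1 * t^-1)) ^+ 2 = N2 / W2.
    rewrite !exprMn !exprVn !sqrtCK; field.
    by rewrite N2nz W2nz.
  by rewrite ler_pdivrMr // lt_def W2nz W0.
rewrite Pur_sq exchange_big /=.
apply: (@le_trans _ _ (\sum_(x' | on_set X x') m *
    \sum_(y | on_set Y y) `|(v (merge x' y))^*| ^+ 2)).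
  apply: ler_sum => x' _.
  apply: le_trans (claimA (fun y => (v (merge x' y))^*)).
  by [].
rewrite -mulr_sumr -[X in _ <= X]mulr1 ler_wpM2l //.
rewrite -(norm1 Hv) -HQ sum_split //.
rewrite le_eqVlt; apply/orP; left; apply/eqP.
apply: eq_bigr => x _; apply: eq_bigr => y _; by rewrite norm_conjC.
Qed.


Lemma disjIC A B C : disj (A :&: C) (B :&: ~: C).
Proof. by move=> i; rewrite !inE => /andP[_ ->]; rewrite andbF. Qed.

Lemma tensCE C (a b : bits n -> K) p : tens C (~: C) a b p = a (restr C p) * b (restr (~: C) p).
Proof.
rewrite /tens setUCr.
by have -> : on_set [set: 'I_n] p by apply/on_setP => i; rewrite inE.
Qed.

Lemma rho_fact C S (a b : bits n -> K) x x' :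
  rho (tens C (~: C) a b) (~: S) x x' =
  rho a (~: S :&: C) (restr C x) (restr C x') *
  rho b (~: S :&: ~: C) (restr (~: C) x) (restr (~: C) x').
Proof.
have E : ~: S = (~: S :&: C) :|: (~: S :&: ~: C) by rewrite -setIUr setUCr setIT.
rewrite /rho {1}E sum_split; last exact: disjIC.
rewrite big_distrlr /=; apply: eq_bigr => z1 H1; apply: eq_bigr => z2 H2.
have [R1 R2] := restr_split H1 H2.
move: R1 R2; rewrite !restr_merge => R1 R2.
rewrite !tensCE !restr_merge R1 R2 rmorphM; ring.
Qed.

Lemma Pur_fact C S (a b : bits n -> K) :
  Pur (tens C (~: C) a b) S (~: S) =
  Pur a (S :&: C) (~: S :&: C) * Pur b (S :&: ~: C) (~: S :&: ~: C).
Proof.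
have E : S = (S :&: C) :|: (S :&: ~: C) by rewrite -setIUr setUCr setIT.
rewrite /Pur {1}E sum_split; last exact: disjIC.
rewrite mulr_suml; apply: eq_bigr => x1 H1.
under eq_bigr => x2 H2 do rewrite {1}E (sum_split _ (@disjIC S S C)).
rewrite exchange_big /= mulr_suml; apply: eq_bigr => x1' H1'.
rewrite mulr_sumr; apply: eq_bigr => x2 H2.
rewrite mulr_sumr; apply: eq_bigr => x2' H2'.
have [R1 R2] := restr_split H1 H2.
have [R1' R2'] := restr_split H1' H2'.
rewrite !rho_fact R1 R2 R1' R2'; ring.
Qed.

End Quantum.

Lemma factor_cases (K : numClosedFieldType) n (eps : K) (Q X Y : {set 'I_n})
  (v : bits n -> K) :
  disj X Y -> X :|: Y = Q -> state_on Q v -> far_from_product eps Q v ->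
  (Pur v X Y = 1 /\ (X = set0 \/ Y = set0)) \/ Pur v X Y <= 1 - eps ^+ 2.
Proof.
move=> HXY HQ Hv Hf.
case: (eqVneq X set0) => [HX | HX].
  left; split; last by left.
  by move: HQ; rewrite HX set0U => ->; apply: Pur_degX.
case: (eqVneq Y set0) => [HY | HY].
  left; split; last by right.
  by move: HQ; rewrite HY setU0 => ->; apply: Pur_degY.
by right; apply: (far_bound HXY HQ).
Qed.

Lemma set_cases n (S C : {set 'I_n}) :
  (S :&: C = set0 \/ ~: S :&: C = set0) ->
  (S :&: ~: C = set0 \/ ~: S :&: ~: C = set0) ->
  [\/ S = set0, S = C, S = ~: C | S = setT].
Proof.
move=> [H1|H1] [H2|H2].
- apply: Or41; apply/setP => i; move/setP/(_ i): H1; move/setP/(_ i): H2; rewrite !inE.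
  by case: (i \in S); case: (i \in C).
- apply: Or43; apply/setP => i; move/setP/(_ i): H1; move/setP/(_ i): H2; rewrite !inE.
  by case: (i \in S); case: (i \in C).
- apply: Or42; apply/setP => i; move/setP/(_ i): H1; move/setP/(_ i): H2; rewrite !inE.
  by case: (i \in S); case: (i \in C).
- apply: Or44; apply/setP => i; move/setP/(_ i): H1; move/setP/(_ i): H2; rewrite !inE.
  by case: (i \in S); case: (i \in C).
Qed.

Unset Implicit Arguments.
Theorem proposition2p17 (K : numClosedFieldType) (n : nat) (eps : K)
  (C : {set 'I_n}) (a b : bits n -> K) (S : {set 'I_n}) :
  eps \is Num.real ->
  C != set0 -> C \proper [set: 'I_n] ->
  state_on C a -> state_on (~: C) b ->
  far_from_product eps C a -> far_from_product eps (~: C) b ->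
  S != set0 -> S \proper [set: 'I_n] ->
  let psi := tens C (~: C) a b in
  ((S = C \/ S = ~: C) -> purity S psi = 1) /\
  (S <> C -> S <> ~: C -> purity S psi <= 1 - eps ^+ 2).
Proof.
move=> Hreal HC0 HCp Ha Hb Hfa Hfb HS0 HSp psi.
rewrite /psi purityE Pur_fact; split.
  case=> ->.
    rewrite setICr !setIid (setIC (~: C)) setICr Pur_degY // Pur_degX //.
    by rewrite mulr1.
  rewrite setCK !setIid (setIC (~: C)) !setICr Pur_degX // Pur_degY //.
  by rewrite mulr1.
move=> HSC HSnC.
have dA : disj (S :&: C) (~: S :&: C).
  by move=> i; rewrite !inE => /andP[-> _].
have dB : disj (S :&: ~: C) (~: S :&: ~: C).
  by move=> i; rewrite !inE => /andP[-> _].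
have QA : (S :&: C) :|: (~: S :&: C) = C by rewrite -setIUl setUCr setTI.
have QB : (S :&: ~: C) :|: (~: S :&: ~: C) = ~: C by rewrite -setIUl setUCr setTI.
have m1 : 1 - eps ^+ 2 <= 1 by rewrite gerBl -realEsqr.
have [[Pa1 Da] | Pam] := factor_cases dA QA Ha Hfa;
have [[Pb1 Db] | Pbm] := factor_cases dB QB Hb Hfb.
- case: (set_cases Da Db) => HS.
  + by rewrite HS eqxx in HS0.
  + by [].
  + by [].
  + by move: HSp; rewrite properT HS eqxx.
- by rewrite Pa1 mul1r.
- by rewrite Pb1 mulr1.
- apply: le_trans Pam; apply: ler_piMr; first exact: Pur_ge0.
  exact: le_trans Pbm m1.
Qed.
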